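(* Let $A = \begin{bmatrix} E & B \\ B^\top & D \end{bmatrix}$ be a symmetric $2N \times 2N$ real matrix, where $E, D$ are symmetric $N\times N$ matrices and $B$ is an $N \times N$ matrix, and fix $\epsilon_0 > 0$. If for all $\epsilon \in (0,\epsilon_0)$ there exist symmetric $N\times N$ matrices $X_\epsilon, -Y_\epsilon$ satisfying $$\begin{bmatrix} X_\epsilon & 0 \\ 0 & -Y_\epsilon \end{bmatrix} \leq A + \epsilon A^2,$$ then $X_\epsilon \leq E + \epsilon_0(E^2 + B B^\top)$ and $-Y_\epsilon \leq D + \epsilon_0(D^2 + B^\top B)$ for all $\epsilon \in (0,\epsilon_0)$.
   Context: Matrices are real; $\mathbb{S}(N)$ denotes the space of symmetric $N\times N$ real matrices, ordered by Löwner's partial order: $P \leq Q$ iff $\langle Px,x\rangle \leq \langle Qx,x\rangle$ for all $x$. In the application, $A = D^2 z(\hat x,\hat y)$ is the Hessian of a $C^2$ test function $z(x,y)$ at a local maximum point of $u(x)-v(y)-z(x,y)$, and $X_\epsilon, Y_\epsilon$ are the matrices produced by the theorem of sums, which satisfy $\begin{bmatrix} X_\epsilon & 0 \\ 0 & -Y_\epsilon \end{bmatrix} \leq A + \epsilon A^2$. *)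

(* Defs.v *)
From mathcomp Require Import all_boot all_order all_algebra.
Set Implicit Arguments. Unset Strict Implicit. Unset Printing Implicit Defensive.
Import Order.TTheory GRing.Theory Num.Theory.
Local Open Scope ring_scope.

Definition symmx (R : realFieldType) (n : nat) (P : 'M[R]_n) : Prop := P^T = P.

Definition loewner_le (R : realFieldType) (n : nat) (P Q : 'M[R]_n) : Prop :=
  forall x : 'cV[R]_n, (x^T *m P *m x) 0 0 <= (x^T *m Q *m x) 0 0.

(* Main.v *)
Require Import Defs.
From mathcomp Require Import all_boot all_order all_algebra.
Import Order.TTheory GRing.Theory Num.Theory.
Local Open Scope ring_scope.

Lemma quad_tl (R : realFieldType) (N : nat) (a b c d : 'M[R]_N) (x : 'cV[R]_N) :
  (col_mx x 0)^T *m block_mx a b c d *m col_mx x 0 = x^T *m a *m x.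
Proof.
by rewrite tr_col_mx mul_row_block mul_row_col ?linear0 ?trmx0 ?mul0mx ?mulmx0 ?addr0.
Qed.

Lemma quad_br (R : realFieldType) (N : nat) (a b c d : 'M[R]_N) (x : 'cV[R]_N) :
  (col_mx 0 x)^T *m block_mx a b c d *m col_mx 0 x = x^T *m d *m x.
Proof.
by rewrite tr_col_mx mul_row_block mul_row_col ?linear0 ?trmx0 ?mul0mx ?mulmx0 ?add0r.
Qed.

Lemma quadDZ (R : realFieldType) (N : nat) (P Q : 'M[R]_N) (e : R) (x : 'cV[R]_N) :
  (x^T *m (P + e *: Q) *m x) 0 0 = (x^T *m P *m x) 0 0 + e * (x^T *m Q *m x) 0 0.
Proof.
by rewrite mulmxDr mulmxDl -scalemxAr -scalemxAl !mxE.
Qed.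

Lemma sq_ge0 (R : realFieldType) (N : nat) (v : 'cV[R]_N) : 0 <= (v^T *m v) 0 0.
Proof.
rewrite mxE; apply: sumr_ge0 => i _; rewrite mxE -expr2; exact: sqr_ge0.
Qed.

Lemma psd_sum (R : realFieldType) (N : nat) (E B : 'M[R]_N) (x : 'cV[R]_N) :
  E^T = E -> 0 <= (x^T *m (E *m E + B *m B^T) *m x) 0 0.
Proof.
move=> sE; rewrite mulmxDr mulmxDl mxE.
have -> : x^T *m (E *m E) *m x = (E *m x)^T *m (E *m x).
  by rewrite trmx_mul sE !mulmxA.
have -> : x^T *m (B *m B^T) *m x = (B^T *m x)^T *m (B^T *m x).
  by rewrite trmx_mul trmxK !mulmxA.
by apply: addr_ge0; apply: sq_ge0.
Qed.

Theorem lemma2 (R : realFieldType) (N : nat) (E B D : 'M[R]_N) (eps0 : R) :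
  symmx E -> symmx D -> 0 < eps0 ->
  forall (eps : R) (X Y : 'M[R]_N),
    0 < eps -> eps < eps0 ->
    symmx X -> symmx (- Y) ->
    loewner_le (block_mx X 0 0 (- Y))
      (block_mx E B B^T D + eps *: (block_mx E B B^T D *m block_mx E B B^T D)) ->
    loewner_le X (E + eps0 *: (E *m E + B *m B^T)) /\
    loewner_le (- Y) (D + eps0 *: (D *m D + B^T *m B)).
Proof.
move=> sE sD e0 eps X Y epos elt _ _.
rewrite mulmx_block scale_block_mx add_block_mx => H.
have le_e : eps <= eps0 by apply: ltW.
split=> x.
- have := H (col_mx x 0); rewrite !quad_tl => Hx.
  apply: (le_trans Hx); rewrite !quadDZ lerD2l.
  by apply: ler_wpM2r => //; apply: psd_sum.
- have := H (col_mx 0 x); rewrite !quad_br => Hx.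
  apply: (le_trans Hx); rewrite !quadDZ lerD2l.
  have := @psd_sum _ _ D B^T x sD; rewrite trmxK addrC => Hp.
  by apply: ler_wpM2r.
Qed.
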